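(* Let $p$ be a prime and $m,k$ positive integers with $k\mid p^m-1$, and set $u=\frac{p^m-1}{k}$. Assume $u$ is a primitive divisor of $p^m-1$ and $u=b(p^{a}-1)$ with integers $a\ge1$, $b>1$, $m=ab$. Let $\omega$ be a primitive element of $\mathbb{F}_{p^m}$ and, for $x\in\mathbb{F}_{p^m}$, write $x=\sum_{i=0}^{b-1}c_i\omega^{ik}$ with $c_i\in\mathbb{F}_{p^a}$ and $[x]=(c_0,\ldots,c_{b-1})\in\mathbb{F}_{p^a}^b$, with $[x]_i:=c_{i-1}$ for $i=1,\ldots,b$. Then for all $x,y\in\mathbb{F}_{p^m}$ and every integer $r\ge0$, $$w_{\Gamma(k,p^m)}(r,x,y)=w_{H(b,p^{a})}(r,[x],[y])=\sum_{\substack{r_1+\cdots+r_b=r\\ r_i\ge0}} \frac{r!}{r_{1}!\cdots r_{b}!}\prod_{i=1}^b a_{i}(x,y),$$ where $$a_{i}(x,y)=\begin{cases}\frac{p^{a}-1}{p^{a}}\big((p^{a}-1)^{r_i-1}-(-1)^{r_i-1}\big) & \text{if } [x]_i=[y]_i,\\[1mm] \frac{1}{p^{a}}\big((p^{a}-1)^{r_i}-(-1)^{r_i}\big) & \text{if } [x]_i\neq[y]_i.\end{cases}$$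
   Context: For $k\mid p^m-1$, the generalized Paley graph $\Gamma(k,p^m)$ has vertex set $\mathbb{F}_{p^m}$, with $x,y$ adjacent iff $y-x\in R_k=\{z^k:z\in\mathbb{F}_{p^m}^*\}$. A divisor $u$ of $p^m-1$ is primitive if $u\nmid p^h-1$ for all $1\le h<m$. Under the hypotheses, $\{1,\omega^k,\omega^{2k},\ldots,\omega^{(b-1)k}\}$ is a basis of $\mathbb{F}_{p^m}$ over $\mathbb{F}_{p^a}$. The Hamming graph $H(b,q)$ has as vertices the $b$-tuples over a set of size $q$ (here $\mathbb{F}_{p^a}$), two tuples adjacent iff they differ in exactly one entry. $w_G(r,v,w)$ is the number of walks of length $r$ from $v$ to $w$ in $G$, with $w_G(0,v,w)=1$ if $v=w$ and $0$ otherwise. *)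

(* Defs.v *)
From HB Require Import structures.
From mathcomp Require Import all_boot all_order all_algebra all_field.
Set Implicit Arguments. Unset Strict Implicit. Unset Printing Implicit Defensive.
Import Order.TTheory GRing.Theory Num.Theory.
Local Open Scope ring_scope.

Fixpoint walks (V : finType) (e : rel V) (r : nat) (v w : V) : nat :=
  match r with
  | 0 => nat_of_bool (v == w)
  | r'.+1 => (\sum_(u : V | e v u) walks e r' u w)%N
  end.

Definition paley_rel (F : finFieldType) (k : nat) : rel F :=
  fun x y => [exists z : F, (z != 0) && (y - x == z ^+ k)].

Definition subF (F : finFieldType) (p a : nat) : finType :=
  {x : F | x ^+ (p ^ a) == x}.

Definition hamming_rel (Q : finType) (b : nat) : rel {ffun 'I_b -> Q} :=
  fun u v => #|[set i | u i != v i]| == 1%N.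

Lemma one_in_subF (F : finFieldType) (p a : nat) : (1 : F) ^+ (p ^ a) == 1.
Proof. by rewrite expr1n. Qed.

Definition one_subF (F : finFieldType) (p a : nat) : subF F p a :=
  exist _ 1 (one_in_subF F p a).

Definition coords (F : finFieldType) (p a b k : nat) (w : F) (x : F)
    : {ffun 'I_b -> subF F p a} :=
  odflt [ffun => one_subF F p a]
    [pick c : {ffun 'I_b -> subF F p a} |
       x == \sum_(i < b) val (c i) * w ^+ (i * k)].

Definition acoef (q ri : nat) (same : bool) : rat :=
  if same then
    ((q%:R - 1) / q%:R) * ((q%:R - 1) ^ (ri%:Z - 1) - (-1) ^ (ri%:Z - 1))
  else
    (1 / q%:R) * ((q%:R - 1) ^ (ri%:Z) - (-1) ^ (ri%:Z)).

(* Main.v *)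
Require Import Defs.
From HB Require Import structures.
From mathcomp Require Import all_boot all_order all_algebra all_field.
From mathcomp Require Import zify ring lra.
Import Order.TTheory GRing.Theory Num.Theory.
Set Implicit Arguments. Unset Strict Implicit. Unset Printing Implicit Defensive.
Local Open Scope ring_scope.

Lemma walks_iso (V V' : finType) (e : rel V) (e' : rel V') (f : V -> V') :
  bijective f -> (forall x y, e' (f x) (f y) = e x y) ->
  forall r v w, walks e' r (f v) (f w) = walks e r v w.
Proof.
move=> fb he r; elim: r => [|r IH] v w /=.
  by rewrite (inj_eq (bij_inj fb)).
rewrite (reindex f (onW_bij _ fb)) /=.
by apply: eq_big => u; [rewrite he | rewrite IH].
Qed.

Definition prodrel (V1 V2 : finType) (e1 : rel V1) (e2 : rel V2) : rel (V1 * V2) :=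
  fun x y => (e1 x.1 y.1 && (x.2 == y.2)) || ((x.1 == y.1) && e2 x.2 y.2).

Definition conv (A B : nat -> nat) n := (\sum_(j < n.+1) 'C(n, j) * A j * B (n - j))%N.



Lemma conv_S A B n :
  conv A B n.+1 = (conv (fun j => A j.+1) B n + conv A (fun j => B j.+1) n)%N.
Proof.
rewrite /conv big_ord_recl /= bin0 subn0.
under eq_bigr => i _ do rewrite /bump leq0n add1n binS mulnDl mulnDl subSS.
rewrite big_split /=.
set S1 := (\sum_(i < n.+1) 'C(n, i) * A i.+1 * B (n - i))%N.
set S2 := (\sum_(i < n.+1) 'C(n, i.+1) * A i.+1 * B (n - i))%N.
have -> : (\sum_(j < n.+1) 'C(n, j) * A j * B (n - j).+1 = 1 * A 0 * B n.+1 + S2)%N.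
  rewrite big_ord_recl /= bin0 subn0; congr (_ + _)%N.
  rewrite /S2 big_ord_recr /= bin_small // !mul0n addn0.
  apply: eq_bigr => i _; rewrite /bump leq0n add1n subnSK //.
by rewrite addnA addnC.
Qed.
Lemma conv_sumA (I : finType) (P : pred I) (A : I -> nat -> nat) B n :
  (\sum_(i | P i) conv (A i) B n)%N = conv (fun j => \sum_(i | P i) A i j)%N B n.
Proof.
rewrite /conv exchange_big /=; apply: eq_bigr => j _.
by rewrite big_distrr /= big_distrl /=.
Qed.

Lemma conv_sumB (I : finType) (P : pred I) A (B : I -> nat -> nat) n :
  (\sum_(i | P i) conv A (B i) n)%N = conv A (fun j => \sum_(i | P i) B i j)%N n.
Proof.
rewrite /conv exchange_big /=; apply: eq_bigr => j _.
by rewrite big_distrr /=.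
Qed.

Lemma sum_pair1 (I J : finType) (P : pred I) (j0 : J) (F : I * J -> nat) :
  (\sum_(z | P z.1 && (j0 == z.2)) F z = \sum_(i | P i) F (i, j0))%N.
Proof.
transitivity (\sum_(i | P i) \sum_(j | j == j0) F (i, j))%N.
  by rewrite pair_big /=; apply: eq_big => [[i j]|[i j]] //=; rewrite eq_sym.
by apply: eq_bigr => i _; rewrite big_pred1_eq.
Qed.

Lemma sum_pair2 (I J : finType) (i0 : I) (Q : pred J) (F : I * J -> nat) :
  (\sum_(z | (i0 == z.1) && Q z.2) F z = \sum_(j | Q j) F (i0, j))%N.
Proof.
transitivity (\sum_(i | i == i0) \sum_(j | Q j) F (i, j))%N.
  by rewrite pair_big /=; apply: eq_big => [[i j]|[i j]] //=; rewrite eq_sym.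
by rewrite big_pred1_eq.
Qed.

Lemma walks_prod (V1 V2 : finType) (e1 : rel V1) (e2 : rel V2) :
  irreflexive e1 -> forall r x1 x2 y1 y2,
  walks (prodrel e1 e2) r (x1, x2) (y1, y2) =
  conv (fun j => walks e1 j x1 y1) (fun j => walks e2 j x2 y2) r.
Proof.
move=> irr r; elim: r => [|r IH] x1 x2 y1 y2.
  by rewrite /= /conv big_ord_recl big_ord0 xpair_eqE /= addn0 mul1n mulnb.
rewrite conv_S /= big_mkcond /=.
rewrite (eq_bigr (fun z => (if e1 x1 z.1 && (x2 == z.2) then walks (prodrel e1 e2) r z (y1, y2) else 0)
   + (if (x1 == z.1) && e2 x2 z.2 then walks (prodrel e1 e2) r z (y1, y2) else 0))%N); last first.
  move=> [z1 z2] _ /=; rewrite /prodrel /=.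
  case: (eqVneq x1 z1) => [<-|_]; first by rewrite irr.
  by rewrite /= orbF addn0.
rewrite big_split /= -!big_mkcond /= sum_pair1 sum_pair2.
under eq_bigr => i _ do rewrite IH.
under [X in (_ + X)%N]eq_bigr => i _ do rewrite IH.
by rewrite conv_sumA conv_sumB.
Qed.

Definition Krel (Q : finType) : rel Q := fun x y => x != y.

Definition splitf (Q : finType) b (c : {ffun 'I_b.+1 -> Q}) : Q * {ffun 'I_b -> Q} :=
  (c ord0, [ffun i => c (lift ord0 i)]).

Definition joinf (Q : finType) b (z : Q * {ffun 'I_b -> Q}) : {ffun 'I_b.+1 -> Q} :=
  [ffun i => if unlift ord0 i is Some j then z.2 j else z.1].

Lemma splitf_bij (Q : finType) b : bijective (@splitf Q b).
Proof.
exists (@joinf Q b).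
  move=> c; apply/ffunP => i; rewrite ffunE.
  by case: unliftP => [j ->|->] /=; rewrite ?ffunE.
case=> q t; rewrite /splitf /joinf /= ffunE unlift_none; congr pair.
by apply/ffunP => j; rewrite !ffunE liftK.
Qed.

Lemma card_set_S b (P : pred 'I_b.+1) :
  #|[set i | P i]| = (P ord0 + #|[set j : 'I_b | P (lift ord0 j)]|)%N.
Proof.
rewrite -!sum1_card big_mkcond big_ord_recl /= inE; congr (_ + _)%N.
by rewrite [RHS]big_mkcond; apply: eq_bigr => j _; rewrite !inE.
Qed.

Lemma hamming_split (Q : finType) b (c d : {ffun 'I_b.+1 -> Q}) :
  hamming_rel c d = prodrel (@Krel Q) (@hamming_rel Q b) (splitf c) (splitf d).
Proof.
rewrite /hamming_rel /prodrel /Krel /= card_set_S /=.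
set n := #|_|.
have En : (n == 0%N) = ([ffun i => c (lift ord0 i)] == [ffun i => d (lift ord0 i)]).
  rewrite cards_eq0; apply/eqP/eqP => [H|H].
    apply/ffunP => /= j; rewrite !ffunE.
    by move/setP: H => /(_ j); rewrite !inE => /negbFE/eqP.
  apply/setP => j; rewrite !inE.
  by move/ffunP: H => /(_ j); rewrite !ffunE => ->; rewrite eqxx.
have -> : #|[set i | [ffun i0 => c (lift ord0 i0)] i != [ffun i0 => d (lift ord0 i0)] i]| = n.
  by apply: eq_card => j; rewrite !inE !ffunE.
rewrite -En; case: (eqVneq (c ord0) (d ord0)) => _ /=; first by rewrite add0n.
by rewrite orbF add1n eqSS.
Qed.

Definition Wc (q n : nat) (s : bool) : rat :=
  if s then ((q%:R - 1) ^+ n + (q%:R - 1) * (-1) ^+ n) / q%:R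
  else ((q%:R - 1) ^+ n - (-1) ^+ n) / q%:R.

Lemma acoefE q n s : (1 < q)%N -> acoef q n s = Wc q n s.
Proof.
move=> q1.
have q0 : q%:R != 0 :> rat by rewrite pnatr_eq0; case: q q1.
have qm1 : q%:R - 1 != 0 :> rat.
  by rewrite subr_eq0 pnatr_eq1; case: q q1 {q0} => [|[|]].
rewrite /acoef /Wc; case: s; last first.
  by rewrite mulrC div1r.
case: n => [|n].
  have -> : ((0%N)%:Z - 1 = -1)%R by [].
  rewrite !expr0 !exprN1 invrN1.
  by field; rewrite q0 qm1.
have -> : (n.+1%:Z - 1 = n%:Z)%R by rewrite -addn1 PoszD addrK.
rewrite -!exprnP !exprSr. by field.
Qed.

Lemma walksK (Q : finType) (y : Q) n : (1 < #|Q|)%N ->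
  forall x, (walks (@Krel Q) n x y)%:R = Wc #|Q| n (x == y).
Proof.
move=> Q1; set q := #|Q|.
have q0 : q%:R != 0 :> rat by rewrite pnatr_eq0 /q; case: #|Q| Q1.
elim: n => [|n IH] x.
  by rewrite /= /Wc; case: (x == y) => /=; [field | rewrite subrr mul0r].
rewrite /= natr_sum; under eq_bigr => z _ do rewrite IH.
set G := fun z => Wc q n (z == y).
have E1 : \sum_z G z = G x + \sum_(z | Krel x z) G z.
  by rewrite (bigD1 x) //=; congr (_ + _); apply: eq_bigl => z; rewrite /Krel eq_sym.
have E2 : \sum_z G z = Wc q n true + Wc q n false *+ (q - 1).
  rewrite (bigD1 y) //= /G eqxx; congr (_ + _).
  rewrite (eq_bigr (fun _ => Wc q n false)); last by move=> z /negbTE ->.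
  by rewrite sumr_const (eq_card (B:=predC1 y)) // cardC1 subn1.
have -> : \sum_(z | Krel x z) Wc q n (z == y) = Wc q n true + Wc q n false *+ (q - 1) - G x.
  by rewrite -E2 E1 [G x + _]addrC addrK.
rewrite /G -mulr_natr natrB; last by apply: ltnW.
rewrite /Wc; case: (x == y); rewrite !exprS; by field.
Qed.

Definition Msum (b N r : nat) (f : 'I_b -> nat -> rat) : rat :=
  \sum_(rr : {ffun 'I_b -> 'I_N.+1} | (\sum_(i < b) (rr i : nat))%N == r)
    ((r`!)%:R / (\prod_(i < b) ((rr i)`!)%:R)) * \prod_(i < b) f i (rr i).
Arguments Msum : clear implicits.

Lemma Msum0 N r f : Msum 0 N r f = (r == 0%N)%:R.
Proof.
rewrite /Msum; case: (eqVneq r 0%N) => [->|rn0].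
  rewrite (big_pred1 [ffun i => ord0]); last first.
    by move=> t /=; rewrite big_ord0 eqxx; apply/esym/eqP/ffunP => -[].
  by rewrite !big_ord0 fact0 /=; field.
rewrite big_pred0 // => t; rewrite big_ord0 eq_sym; exact/negbTE.
Qed.

Lemma joinf_bij (Q : finType) b : bijective (@joinf Q b).
Proof.
exists (@splitf Q b).
  case=> q t; rewrite /splitf /joinf /= ffunE unlift_none; congr pair.
  by apply/ffunP => j; rewrite !ffunE liftK.
move=> c; apply/ffunP => i; rewrite ffunE.
by case: unliftP => [j ->|->] /=; rewrite ?ffunE.
Qed.

Lemma sum_joinf b N (z : 'I_N.+1 * {ffun 'I_b -> 'I_N.+1}) :
  (\sum_(i < b.+1) (joinf z i : nat) = z.1 + \sum_(i < b) (z.2 i : nat))%N.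
Proof.
rewrite big_ord_recl /joinf ffunE unlift_none; congr (_ + _)%N.
by apply: eq_bigr => i _; rewrite ffunE liftK.
Qed.

Lemma prod_joinf b N (g : 'I_b.+1 -> nat -> rat) (z : 'I_N.+1 * {ffun 'I_b -> 'I_N.+1}) :
  \prod_(i < b.+1) g i (joinf z i) = g ord0 z.1 * \prod_(i < b) g (lift ord0 i) (z.2 i).
Proof.
rewrite big_ord_recl /joinf ffunE unlift_none; congr (_ * _).
by apply: eq_bigr => i _; rewrite ffunE liftK.
Qed.

Lemma MsumS b N r f : (r <= N)%N ->
  Msum b.+1 N r f = \sum_(j < N.+1 | (j <= r)%N)
     'C(r, j)%:R * f ord0 j * Msum b N (r - j) (fun i => f (lift ord0 i)).
Proof.
move=> rN; rewrite /Msum (reindex (@joinf _ b) (onW_bij _ (joinf_bij _ b))) /=.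
under eq_bigl => z do rewrite sum_joinf.
under eq_bigr => z _ do rewrite (prod_joinf (fun i j => ((j`!)%:R : rat))) (prod_joinf f).
transitivity (\sum_(j : 'I_N.+1 | (j <= r)%N) \sum_(t : {ffun 'I_b -> 'I_N.+1} |
     (\sum_(i < b) (t i : nat))%N == (r - j)%N)
     (r`!)%:R / (((j : nat)`!)%:R * \prod_(i < b) (((t i) : nat)`!)%:R) *
                        (f ord0 j * \prod_(i < b) f (lift ord0 i) (t i))).
  rewrite pair_big_dep; apply: eq_big => [[j t]|[j t] _] //=.
  by apply/idP/andP => [/eqP <-|[h /eqP ->]]; [rewrite leq_addr addKn|rewrite subnKC].
apply: eq_bigr => j jr; rewrite big_distrr /=; apply: eq_bigr => t _.
have hP : \prod_(i < b) (((t i) : nat)`!)%:R != 0 :> rat.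
  by rewrite -natr_prod pnatr_eq0 -lt0n prodn_gt0 // => i; rewrite fact_gt0.
have hj : ((j : nat)`!)%:R != 0 :> rat by rewrite pnatr_eq0 -lt0n fact_gt0.
have hrj : ((r - j)`!)%:R != 0 :> rat by rewrite pnatr_eq0 -lt0n fact_gt0.
rewrite -(bin_fact jr) !natrM; by field; rewrite hj hP.
Qed.

Lemma Msum_ext b N r f g : (forall i j, f i j = g i j) -> Msum b N r f = Msum b N r g.
Proof.
move=> fg; rewrite /Msum; apply: eq_bigr => rr _; congr (_ * _).
by apply: eq_bigr => i _.
Qed.

Lemma walks_hamming (Q : finType) (b : nat) : (1 < #|Q|)%N ->
  forall N r, (r <= N)%N -> forall c d : {ffun 'I_b -> Q},
  (walks (@hamming_rel Q b) r c d)%:R = Msum b N r (fun i j => acoef #|Q| j (c i == d i)).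
Proof.
move=> Q1; elim: b => [|b IH] N r rN c d.
  rewrite Msum0; case: r rN => [|r] _ /=.
    have -> : c = d by apply/ffunP => -[].
    by rewrite eqxx.
  rewrite big_mkcond big1 // => u _; rewrite /hamming_rel.
  by rewrite (_ : [set i | _] = set0) ?cards0 //; apply/setP => -[].
rewrite MsumS //.
rewrite -(walks_iso (splitf_bij Q b) (fun x y => esym (hamming_split x y))).
rewrite /splitf walks_prod; last by move=> x; rewrite /Krel eqxx.
rewrite /conv natr_sum (big_ord_widen N.+1 (fun j : nat =>
  ('C(r, j) * walks (@Krel Q) j (c ord0) (d ord0) *
   walks (@hamming_rel Q b) (r - j) [ffun i => c (lift ord0 i)] [ffun i => d (lift ord0 i)])%:R)
   (rN : (r < N.+1)%N)).
apply: eq_big => [j|j jr]; first by rewrite ltnS.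
rewrite !natrM walksK // acoefE //; congr (_ * _ * _).
rewrite (IH N (r - j)%N); last by rewrite (leq_trans (leq_subr _ _)).
by apply: Msum_ext => i k; rewrite !ffunE.
Qed.


Lemma frob_nat (F : finFieldType) p a : p \in [pchar F] -> [pchar F].-nat (p ^ a)%N.
Proof.
move=> hc; rewrite (eq_pnat _ (pcharf_eq hc)) pnatX pnat_id //.
exact: pcharf_prime hc.
Qed.

Lemma frobD (F : finFieldType) p a (x y : F) : p \in [pchar F] ->
  (x + y) ^+ (p ^ a)%N = x ^+ (p ^ a)%N + y ^+ (p ^ a)%N.
Proof. by move=> hc; apply: exprDn_pchar; apply: frob_nat hc. Qed.

Lemma frobB (F : finFieldType) p a (x y : F) : p \in [pchar F] ->
  (x - y) ^+ (p ^ a)%N = x ^+ (p ^ a)%N - y ^+ (p ^ a)%N.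
Proof.
by move=> hc; rewrite frobD // exprNn_pchar //; apply: frob_nat hc.
Qed.

Lemma frob_sum (F : finFieldType) p a (I : finType) (f : I -> F) : p \in [pchar F] ->
  (\sum_i f i) ^+ (p ^ a)%N = \sum_i f i ^+ (p ^ a)%N.
Proof.
move=> hc; apply: (big_morph (fun x : F => x ^+ (p ^ a)%N)).
  by move=> x y; apply: frobD.
by rewrite expr0n expn_eq0 (negbTE (lt0n_neq0 (prime_gt0 (pcharf_prime hc)))).
Qed.

Lemma unit_pow (F : finFieldType) (x : F) : x != 0 -> x ^+ (#|F|.-1) = 1.
Proof.
move=> xn0; have := expf_card x.
have h : (0 < #|F|)%N by apply/card_gt0P; exists x.
rewrite -(prednK h) exprS => e; apply: (mulfI xn0); by rewrite mulr1.
Qed.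

Lemma powS_in (F : finFieldType) (w : F) n k b q t :
  n.-primitive_root w -> n = (k * (b * (q - 1)))%N -> (0 < q)%N ->
  (w ^+ (k * b * t)) ^+ q = w ^+ (k * b * t).
Proof.
move=> hw hn q0; rewrite -exprM; apply/eqP; rewrite (eq_prim_root_expr hw).
rewrite eqn_mod_dvd; last by rewrite leq_pmulr.
rewrite -[X in (_ - X)%N]muln1 -mulnBr hn; apply/dvdnP; exists t; ring.
Qed.

Lemma powS_out (F : finFieldType) (w : F) n k b q (x : F) :
  n.-primitive_root w -> n = (k * (b * (q - 1)))%N -> (1 < q)%N -> (0 < k * b)%N ->
  x ^+ n = 1 -> x ^+ q = x -> exists2 t, (t < q - 1)%N & x = w ^+ (k * b * t).
Proof.
move=> hw hn q1 kb0 xn xq.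
have [[i ilt] /= xi] := prim_rootP hw xn; rewrite xi in xq *.
move: xq; rewrite -exprM => /eqP; rewrite (eq_prim_root_expr hw).
rewrite eqn_mod_dvd; last by rewrite leq_pmulr // ltnW.
rewrite -[X in (_ - X)%N]muln1 -mulnBr hn mulnA.
have q10 : (0 < q - 1)%N by rewrite subn_gt0.
rewrite dvdn_pmul2r // => hd.
exists (i %/ (k * b))%N; last by rewrite mulnC divnK.
by rewrite ltn_divLR // mulnC -mulnA -hn.
Qed.

Lemma coprime_n_p p e : prime p -> (0 < e)%N -> coprime (p ^ e - 1) p.
Proof.
move=> hp e0; rewrite coprime_sym prime_coprime //; apply/negP => hpn.
have h1 : (p %| p ^ e)%N by apply: dvdn_exp.
have := dvdn_sub h1 hpn; rewrite subKn ?expn_gt0 ?prime_gt0 // dvdn1.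
by move/eqP => p1; move: hp; rewrite p1.
Qed.

Lemma indep (F : finFieldType) (w : F) p a b k n (f : nat -> F) :
  prime p -> p \in [pchar F] -> n.-primitive_root w ->
  n = (k * (b * (p ^ a - 1)))%N -> (0 < k)%N -> (1 <= a)%N ->
  n = (p ^ (a * b) - 1)%N ->
  (forall h, (1 <= h < a * b)%N -> ~~ ((b * (p ^ a - 1)) %| p ^ h - 1)%N) ->
  (forall i, f i ^+ (p ^ a)%N = f i) ->
  \sum_(i < b) f i * w ^+ (i * k) = 0 -> forall i, (i < b)%N -> f i = 0.
Proof.
move=> hp hc hw hn k0 a1 hn2 hprim hf hs i ib.
apply/eqP/negPn/negP => fi0.
set q := (p ^ a)%N; set u := (b * (q - 1))%N.
have p1 : (1 < p)%N by apply: prime_gt1.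
have q0 : (0 < q)%N by rewrite expn_gt0 prime_gt0.
have b0 : (0 < b)%N by apply: leq_ltn_trans ib.
set g := \poly_(j < b) f j.
have g0 : g != 0.
  apply/eqP => g0; move: fi0; have := congr1 (fun P : {poly F} => P`_i) g0.
  by rewrite coef_poly ib coef0 => ->; rewrite eqxx.
have hfrob : forall y, g.[y ^+ q] = g.[y] ^+ q.
  move=> y; rewrite !horner_poly frob_sum //; apply: eq_bigr => j _.
  by rewrite exprMn hf exprAC.
set beta := w ^+ k.
have hroot : forall j, g.[beta ^+ (q ^ j)] = 0.
  elim=> [|j IH].
    rewrite expn0 expr1 horner_poly -[RHS]hs; apply: eq_bigr => j _.
    by rewrite /beta -exprM (mulnC k).
  by rewrite expnSr exprM hfrob IH expr0n eqn0Ngt q0.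
have key : forall j1 j2, (j1 < j2 < b)%N -> beta ^+ (q ^ j1) != beta ^+ (q ^ j2).
  move=> j1 j2 /andP[lt12 lt2b]; apply/negP => /eqP E.
  move: E; rewrite /beta -!exprM => /eqP; rewrite (eq_prim_root_expr hw) eq_sym.
  rewrite eqn_mod_dvd; last by apply: leq_mul => //; apply: leq_pexp2l => //; apply: ltnW.
  rewrite -mulnBr hn dvdn_pmul2l // -/q -/u.
  have -> : (q ^ j2 = q ^ j1 * q ^ (j2 - j1))%N by rewrite -expnD subnKC // ltnW.
  rewrite -[X in (_ - X)%N]muln1 -mulnBr Gauss_dvdr; last first.
    apply: coprimeXr; apply: coprimeXr.
    apply: (@coprime_dvdl _ n); first by rewrite hn dvdn_mull.
    rewrite hn2; apply: coprime_n_p => //; rewrite muln_gt0 (leq_trans _ a1) //.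
  rewrite /q -expnM => hd.
  have := hprim (a * (j2 - j1))%N; rewrite hd => /(_ _)/negP; apply.
  rewrite muln_gt0 subn_gt0 lt12 (leq_trans _ a1) //= ltn_pmul2l ?(leq_trans _ a1) //.
  by rewrite (leq_ltn_trans (leq_subr _ _) lt2b).
  by [].
set rs := [seq beta ^+ (q ^ j) | j <- iota 0 b].
have := max_poly_roots g0 (rs := rs).
have -> : all (root g) rs by apply/allP => y /mapP[j _ ->]; apply/eqP; apply: hroot.
have -> : uniq rs.
  rewrite map_inj_in_uniq ?iota_uniq // => j1 j2; rewrite !mem_iota !add0n.
  move=> /andP[_ h1] /andP[_ h2] E; case: (ltngtP j1 j2) => // c.
    by move: (key j1 j2); rewrite c h2 E eqxx => /(_ isT).
  by move: (key j2 j1); rewrite c h1 E eqxx => /(_ isT).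
move=> /(_ isT isT); rewrite size_map size_iota ltnNge size_poly //.
Qed.

Unset Implicit Arguments.

Theorem proposition4p2 (p m k a b : nat) (F : finFieldType) (w : F) :
  prime p -> (0 < m)%N -> (0 < k)%N ->
  #|F| = (p ^ m)%N ->
  (k %| p ^ m - 1)%N ->
  (forall h : nat, (1 <= h < m)%N -> ~~ (((p ^ m - 1) %/ k) %| p ^ h - 1)%N) ->
  (1 <= a)%N -> (1 < b)%N -> m = (a * b)%N ->
  ((p ^ m - 1) %/ k)%N = (b * (p ^ a - 1))%N ->
  (p ^ m - 1)%N.-primitive_root w ->
  forall (x y : F) (r : nat),
    walks (paley_rel k) r x y
      = walks (@hamming_rel (subF F p a) b) r (coords p a b k w x) (coords p a b k w y)
    /\
    (walks (paley_rel k) r x y)%:R =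
      \sum_(rr : {ffun 'I_b -> 'I_r.+1} | (\sum_(i < b) (rr i : nat))%N == r)
        ((r`!)%:R / (\prod_(i < b) ((rr i)`!)%:R)) *
        \prod_(i < b) acoef (p ^ a) (rr i)
                        (coords p a b k w x i == coords p a b k w y i) :> rat.
Proof.
move=> hp m0 k0 hF hk hprim a1 b1 hm hu hw x y r.
set q := (p ^ a)%N; set n := (p ^ m - 1)%N.
have hc : p \in [pchar F] := card_finPcharP hF hp.
have hn : n = (k * (b * (q - 1)))%N by rewrite /n -{1}(divnK hk) hu mulnC.
have hn2 : n = (p ^ (a * b) - 1)%N by rewrite /n hm.
have hprim' : forall h, (1 <= h < a * b)%N -> ~~ ((b * (p ^ a - 1)) %| p ^ h - 1)%N.
  by rewrite -hu -hm.
have q1 : (1 < q)%N.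
  by rewrite /q (leq_trans (prime_gt1 hp)) // -{1}(expn1 p) leq_pexp2l // prime_gt0.
have q0 : (0 < q)%N by apply: ltnW.
have b0 : (0 < b)%N by apply: ltnW.
have kb0 : (0 < k * b)%N by rewrite muln_gt0 k0.
have n0 : (0 < n)%N := prim_order_gt0 hw.
have unitn : forall z : F, z != 0 -> z ^+ n = 1.
  by move=> z z0; rewrite /n -hF subn1 unit_pow.
have w0 : w != 0.
  apply/eqP => w0; move: (prim_expr_order hw); rewrite w0 expr0n -/n eqn0Ngt n0 /=.
  by move/eqP; rewrite eq_sym oner_eq0.
pose S := subF F p a.
have valS : forall s : S, val s ^+ q = val s by move=> s; apply/eqP; exact: (valP s).
pose phi := fun c : {ffun 'I_b -> S} => \sum_(i < b) val (c i) * w ^+ (i * k).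
have phiB : forall c d, phi d - phi c = \sum_(i < b) (val (d i) - val (c i)) * w ^+ (i * k).
  by move=> c d; rewrite /phi -sumrB; apply: eq_bigr => i _; rewrite mulrBl.
have phi_inj : injective phi.
  move=> c d E; apply/ffunP => i; apply: val_inj.
  pose f := fun j : nat => if (insub j : option 'I_b) is Some i' then val (d i') - val (c i') else 0.
  have hf : forall j, f j ^+ (p ^ a)%N = f j.
    move=> j; rewrite /f; case: insub => [i'|]; first by rewrite frobB // !valS.
    by rewrite expr0n -/q eqn0Ngt q0.
  have hs : \sum_(i < b) f i * w ^+ (i * k) = 0.
    rewrite /f; under eq_bigr => j _ do rewrite valK.
    by rewrite -phiB E subrr.
  have := indep hp hc hw hn k0 a1 hn2 hprim' hf hs (ltn_ord i).
  by rewrite /f valK => /eqP; rewrite subr_eq0 => /eqP.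
have cardS : #|S| = q.
  rewrite /S /subF card_sig.
  have -> : #|[pred z : F | z ^+ (p ^ a)%N == z]| =
            #|0 |: [set w ^+ (k * b * t) | t : 'I_(q - 1)]|.
    apply: eq_card => z; rewrite !inE -/q.
    case: (eqVneq z 0) => [->|z0] /=; first by rewrite expr0n eqn0Ngt q0 /= !eqxx.
    apply/idP/imsetP => [/eqP zq|[t _ ->]].
      have [t tlt zt] := powS_out hw hn q1 kb0 (unitn z z0) zq.
      by exists (Ordinal tlt).
    by apply/eqP; apply: powS_in hw hn q0.
  rewrite cardsU1 card_imset; last first.
    move=> t1 t2 /eqP; rewrite (eq_prim_root_expr hw) !modn_small; last first.
    - by rewrite -/n hn mulnA ltn_pmul2l.
    - by rewrite -/n hn mulnA ltn_pmul2l.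
    by rewrite eqn_pmul2l // => /eqP /val_inj.
  have -> : (0 : F) \notin [set w ^+ (k * b * t) | t : 'I_(q - 1)].
    by apply/imsetP => -[t _ /esym/eqP]; rewrite expf_eq0 (negbTE w0) andbF.
  by rewrite card_ord /nat_of_bool add1n subn1 prednK.
have phi_bij : bijective phi.
  have hcard : (#|F| <= #|{ffun 'I_b -> S}|)%N.
    by rewrite card_ffun cardS card_ord hF hm expnM.
  exact: (inj_card_bij phi_inj hcard).
have coordsK : forall z, phi (coords p a b k w z) = z.
  move=> z; rewrite /coords; case: pickP => [c /eqP E|H] /=; first by rewrite E.
  case: phi_bij => g _ gK; have := H (g z).
  by rewrite [X in (z == X)](_ : _ = phi (g z)) // gK eqxx.
have coords_bij : bijective (coords p a b k w).
  exists phi; first by move=> z; apply: coordsK.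
  by move=> c; apply: phi_inj; rewrite coordsK.
have adj : forall c d, paley_rel k (phi c) (phi d) = hamming_rel c d.
  move=> c d; rewrite /paley_rel /hamming_rel; apply/idP/idP.
    case/existsP => z /andP[z0 /eqP hz].
    have [[j jlt] /= zj] := prim_rootP hw (unitn z z0).
    pose i0 : 'I_b := Ordinal (ltn_pmod j b0).
    pose e := w ^+ (k * b * (j %/ b)).
    have e0 : e != 0 by rewrite expf_neq0.
    have he : z ^+ k = e * w ^+ (i0 * k).
      rewrite zj -exprM -exprD /=; congr (w ^+ _).
      rewrite {1}(divn_eq j b); ring.
    pose f := fun j' : nat => if (insub j' : option 'I_b) is Some i'
      then val (d i') - val (c i') - (if i' == i0 then e else 0) else 0.
    have hf : forall j', f j' ^+ (p ^ a)%N = f j'.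
      move=> j'; rewrite /f; case: insub => [i'|]; last first.
        by rewrite expr0n -/q eqn0Ngt q0.
      rewrite !frobB // !valS; case: (i' == i0); last by rewrite expr0n -/q eqn0Ngt q0.
      by rewrite /e (powS_in _ hw hn q0).
    have hs : \sum_(i < b) f i * w ^+ (i * k) = 0.
      rewrite /f; under eq_bigr => j' _ do rewrite valK mulrBl.
      rewrite sumrB -phiB hz he (bigD1 i0) //= eqxx big1 ?addr0 ?subrr //.
      by move=> i /negbTE ->; rewrite mul0r.
    have hi := indep hp hc hw hn k0 a1 hn2 hprim' hf hs.
    apply/cards1P; exists i0; apply/setP => i; rewrite !inE.
    have := hi i (ltn_ord i); rewrite /f valK => /eqP; rewrite subr_eq0 => /eqP.
    case: (eqVneq i i0) => [->|ne] hd.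
      apply/negP => /eqP E; move: e0; by rewrite -hd E subrr eqxx.
    move/eqP: hd; rewrite subr_eq0 => /eqP/val_inj ->.
    by rewrite eqxx.
  case/cards1P => i0 Hset.
  have hdi : forall i, i != i0 -> val (d i) = val (c i).
    move=> i ii0; have : i \notin [set i0] by rewrite inE.
    by rewrite -Hset inE negbK => /eqP ->.
  pose e := val (d i0) - val (c i0).
  have e0 : e != 0.
    have : i0 \in [set i0] by rewrite inE.
    by rewrite -Hset inE; apply: contra => /eqP /subr0_eq /val_inj ->.
  have eq : e ^+ q = e by rewrite frobB // !valS.
  have [t _ et] := powS_out hw hn q1 kb0 (unitn e e0) eq.
  apply/existsP; exists (w ^+ (b * t + i0)); rewrite expf_neq0 //=.
  rewrite phiB (bigD1 i0) //= big1 ?addr0; last first.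
    by move=> i ii0; rewrite hdi // subrr mul0r.
  rewrite -/e et -exprM -exprD; apply/eqP; congr (w ^+ _); ring.
have adj' : forall u v, hamming_rel (coords p a b k w u) (coords p a b k w v) = paley_rel k u v.
  by move=> u v; rewrite -adj !coordsK.
have E1 := esym (walks_iso coords_bij adj' r x y).
split; first exact: E1.
have S1 : (1 < #|S|)%N by rewrite cardS.
rewrite E1 (@walks_hamming S b S1 r r (leqnn r)) cardS.
by [].
Qed.
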